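(* Let $\{(\mathbf{x}^{(i)},y^{(i)})\}_{i=1}^n$ with $\mathbf{x}^{(i)}\in\mathbb{R}^d$, $y^{(i)}\in\{-1,1\}$, $\|\mathbf{x}^{(i)}\|_2\le1$, and suppose there is $\mathbf{w}^*\in\mathbb{R}^d$ with $\|\mathbf{w}^*\|_2=1$ and $\min_{i\in[n]}y^{(i)}\mathbf{x}^{(i)\top}\mathbf{w}^*=\gamma>0$. Let $A\in\mathbb{R}^{n\times d}$ have $i$-th row $y^{(i)}\mathbf{x}^{(i)\top}$, let $\alpha_t=t$, $g(\mathbf{w},\mathbf{p})=\mathbf{p}^{\top}A\mathbf{w}-\tfrac12\|\mathbf{w}\|_2^2$, $\mathbf{p}_0=\tfrac{\mathbf{1}}{n}$, and for $j\ge0$ let $h_j(\mathbf{w})=-g(\mathbf{w},\mathbf{p}_j)$, $\ell_j(\mathbf{p})=g(\mathbf{w}_j,\mathbf{p})$. For $t=1,\dots,T$ define $\mathbf{w}_t=\arg\min_{\mathbf{w}\in\mathbb{R}^d}\sum_{j=1}^{t-1}\alpha_jh_j(\mathbf{w})+\alpha_th_{t-1}(\mathbf{w})$, and then $\mathbf{p}_t=\arg\min_{\mathbf{p}\in\Delta^n}\tfrac14\sum_{s=1}^{t}\alpha_s\ell_s(\mathbf{p})+D_E(\mathbf{p},\tfrac{\mathbf{1}}{n})$, and let $\overline{\mathbf{w}}_T=\frac{\sum_{t=1}^T\alpha_t\mathbf{w}_t}{\sum_{t=1}^T\alpha_t}$. Define the weighted regrets $R^{\mathbf{w}}=\sum_{t=1}^T\alpha_th_t(\mathbf{w}_t)-\min_{\mathbf{w}\in\mathbb{R}^d}\sum_{t=1}^T\alpha_th_t(\mathbf{w})$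 and $R^{\mathbf{p}}=\sum_{t=1}^T\alpha_t\ell_t(\mathbf{p}_t)-\min_{\mathbf{p}\in\Delta^n}\sum_{t=1}^T\alpha_t\ell_t(\mathbf{p})$. Then $R^{\mathbf{w}}\le 2\sum_{t=1}^T\|\mathbf{p}_t-\mathbf{p}_{t-1}\|_1^2$ and $R^{\mathbf{p}}\le 4\log n-2\sum_{t=1}^T\|\mathbf{p}_t-\mathbf{p}_{t-1}\|_1^2$. Moreover, there is a universal constant $C>0$ such that whenever $T\ge C\sqrt{\log n}/\gamma$, $\overline{\mathbf{w}}_T$ has non-negative margin, i.e. $\min_{i\in[n]}y^{(i)}\mathbf{x}^{(i)\top}\overline{\mathbf{w}}_T\ge0$.
   Context: $\Delta^n$ is the probability simplex in $\mathbb{R}^n$; $\mathbf{1}$ the all-ones vector; $D_E(\mathbf{p},\mathbf{q})=\sum_ip_i\log(p_i/q_i)$ is the Bregman divergence of the negative entropy $E(\mathbf{p})=\sum_ip_i\log p_i$ (the KL divergence). These dynamics are the game-theoretic form of the Smooth Perceptron of Soheili and Peña. *)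

(* Defs.v *)
From mathcomp Require Import all_boot all_order all_algebra.
From mathcomp Require Import all_classical all_reals all_analysis.
Set Implicit Arguments. Unset Strict Implicit. Unset Printing Implicit Defensive.
Import Order.TTheory GRing.Theory Num.Theory.
Local Open Scope ring_scope.

Section Defs.
Variables (R : realType) (n d : nat).

Definition dotd (u v : 'I_d -> R) : R := \sum_(k < d) u k * v k.
Definition sqnorm2 (u : 'I_d -> R) : R := \sum_(k < d) u k ^+ 2.
Definition norm1 (u : 'I_n -> R) : R := \sum_(i < n) `|u i|.

Definition simplex (p : 'I_n -> R) : Prop :=
  (forall i, 0 <= p i) /\ \sum_(i < n) p i = 1.

Definition uniform : 'I_n -> R := fun _ => (n%:R)^-1.

(* KL divergence = Bregman divergence of the negative entropy
   (with 0 log 0 = 0: the term p_i * ln(...) vanishes when p_i = 0) *)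
Definition KL (p q : 'I_n -> R) : R := \sum_(i < n) p i * ln (p i / q i).

Definition Amat (x : 'I_n -> 'I_d -> R) (y : 'I_n -> R) : 'I_n -> 'I_d -> R :=
  fun i k => y i * x i k.

Definition gfun (A : 'I_n -> 'I_d -> R) (w : 'I_d -> R) (p : 'I_n -> R) : R :=
  \sum_(i < n) p i * dotd (A i) w - 2^-1 * sqnorm2 w.

Definition alpha (t : nat) : R := t%:R.

Definition obj_w A (p : nat -> 'I_n -> R) (t : nat) (w : 'I_d -> R) : R :=
  \sum_(1 <= j < t) alpha j * (- gfun A w (p j)) + alpha t * (- gfun A w (p t.-1)).

Definition obj_p A (w : nat -> 'I_d -> R) (t : nat) (q : 'I_n -> R) : R :=
  4^-1 * \sum_(1 <= s < t.+1) alpha s * gfun A (w s) q + KL q uniform.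

Definition wbar (w : nat -> 'I_d -> R) (T : nat) : 'I_d -> R :=
  fun k => (\sum_(1 <= t < T.+1) alpha t * w t k) / \sum_(1 <= t < T.+1) alpha t.

Definition data_ok (x : 'I_n -> 'I_d -> R) (y : 'I_n -> R) (gamma : R) : Prop :=
  (0 < n)%N /\
  (forall i, y i = 1 \/ y i = -1) /\
  (forall i, sqnorm2 (x i) <= 1) /\
  (exists wstar : 'I_d -> R, sqnorm2 wstar = 1 /\
     (forall i, gamma <= dotd (Amat x y i) wstar) /\
     (exists i, dotd (Amat x y i) wstar = gamma)) /\
  0 < gamma.

Definition dynamics (A : 'I_n -> 'I_d -> R) (T : nat)
    (w : nat -> 'I_d -> R) (p : nat -> 'I_n -> R) : Prop :=
  p 0%N = uniform /\
  (forall t, (1 <= t <= T)%N ->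
     forall w' : 'I_d -> R, obj_w A p t (w t) <= obj_w A p t w') /\
  (forall t, (1 <= t <= T)%N ->
     simplex (p t) /\ forall q, simplex q -> obj_p A w t (p t) <= obj_p A w t q).

End Defs.

(* Main.v *)
Require Import Defs.
From mathcomp Require Import all_boot all_order all_algebra.
From mathcomp Require Import all_classical all_reals all_analysis.
From mathcomp Require Import ring lra.
Import Order.TTheory GRing.Theory Num.Theory.
Import numFieldNormedType.Exports.
Local Open Scope ring_scope.
Local Open Scope classical_set_scope.

Section S.
Variable R : realType.

Lemma is_derive_ln1m (x : R) : x < 1 -> is_derive x 1 (fun y => ln (1 - y)) (- (1 - x)^-1).
Proof.
move=> x1.
have h1 : is_derive x 1 (fun y : R => 1 - y) (-1).
  by apply: is_derive_eq; ring.
have h2 : is_derive (1 - x) 1 (@ln R) (1 - x)^-1 by apply: is_derive1_ln; rewrite subr_gt0.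
have d1 : derivable (fun y : R => 1 - y) x 1 by [].
have d2 : derivable (@ln R) (1 - x) 1 by [].
have -> : (fun y => ln (1 - y)) = (@ln R) \o (fun y => 1 - y) by [].
apply: DeriveDef.
  apply/derivable1_diffP; apply: differentiable_comp; exact/derivable1_diffP.
rewrite -derive1E derive1_comp // !derive1E.
by have [_ ->] := h1; have [_ ->] := h2; rewrite mulrN1.
Qed.



Lemma nonincr_cc (f : R -> R) (a b : R) : b <= a ->
  (forall x, b <= x <= a -> derivable f x 1) ->
  (forall x, b < x < a -> f^`() x <= 0) -> f a <= f b.
Proof.
move=> ba df d0.
apply: (@ler0_derive1_nincr R f b a) => [x|x|||//|//].
- by rewrite in_itv /= => /andP[h1 h2]; apply: df; rewrite !ltW.
- by rewrite in_itv /= => /andP[h1 h2]; apply: d0; rewrite h1 h2.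
- apply: derivable_within_continuous => x; rewrite in_itv /=; exact: df.
- done.
Qed.

Lemma binary_pinsker (a b : R) : 0 < b -> b <= a -> a <= 1 ->
  2 * (a - b) ^+ 2 <= a * ln (a / b) + (1 - a) * ln ((1 - a) / (1 - b)).
Proof.
move=> b0 ba a1.
have a0 : 0 < a by apply: lt_le_trans ba.
have [a1e|a1'] := eqVneq a 1.
  subst a.
  rewrite subrr mul0r addr0 mul1r div1r lnV ?posrE //.
  pose f := fun x : R => - ln x - 2 * (1 - x) ^+ 2.
  have df : forall x : R, 0 < x -> is_derive x 1 f (- x^-1 + 4 * (1 - x)).
    move=> x x0; have := is_derive1_ln x0 => Hl.
    apply: is_derive_eq; rewrite -![_ *: _]/(_ * _); ring.
  have := @nonincr_cc f 1 b ba.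
  have -> : f 1 = 0 by rewrite /f ln1 subrr expr0n /=; lra.
  rewrite /f => H; suff : 0 <= - ln b - 2 * (1 - b) ^+ 2 by lra.
  apply: H.
  - move=> x /andP[bx _]; have [+ _] := df x (lt_le_trans b0 bx); done.
  - move=> x /andP[bx x1]; have x0 := lt_trans b0 bx.
    rewrite derive1E; have [_ ->] := df x x0.
    have -> : - x^-1 + 4 * (1 - x) = - ((2 * x - 1) ^+ 2 / x) by field; rewrite gt_eqF.
    rewrite oppr_le0; apply: divr_ge0 => //; [exact: sqr_ge0|exact: ltW].
have a1s : a < 1 by rewrite lt_neqAle a1' a1.
pose f := fun x : R => - a * ln x - (1 - a) * ln (1 - x) - 2 * (a - x) ^+ 2.
have df : forall x : R, 0 < x -> x < 1 ->
    is_derive x 1 f (- a * x^-1 + (1 - a) * (1 - x)^-1 + 4 * (a - x)).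
  move=> x x0 x1; have := is_derive1_ln x0 => Hl; have := is_derive_ln1m _ x1 => Hl2.
  apply: is_derive_eq; rewrite -![_ *: _]/(_ * _); ring.
have := @nonincr_cc f a b ba.
rewrite /f => H.
have : - a * ln a - (1 - a) * ln (1 - a) - 2 * (a - a) ^+ 2 <=
       - a * ln b - (1 - a) * ln (1 - b) - 2 * (a - b) ^+ 2.
  apply: H.
  - move=> x /andP[bx xa]; have [+ _] := df x (lt_le_trans b0 bx) (le_lt_trans xa a1s); done.
  - move=> x /andP[bx xa]; have x0 := lt_trans b0 bx; have x1 := lt_trans xa a1s.
    rewrite derive1E; have [_ ->] := df x x0 x1.
    have -> : - a * x^-1 + (1 - a) * (1 - x)^-1 + 4 * (a - x) =
              (x - a) * (1 - 2 * x) ^+ 2 / (x * (1 - x)).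
      by field; rewrite ?gt_eqF ?subr_gt0 //.
    rewrite pmulr_lle0 ?invr_gt0 ?mulr_gt0 ?subr_gt0 //.
    by apply: mulr_le0_ge0; [rewrite subr_le0 ltW | exact: sqr_ge0].
rewrite ln_div ?posrE ?subr_gt0 // ln_div ?posrE ?subr_gt0 //.
rewrite subrr expr0n /=; lra.
exact: le_lt_trans ba a1s.
Qed.


Lemma ln_le_sub1 (y : R) : 0 < y -> ln y <= y - 1.
Proof.
move=> y0; have := @le_ln1Dx R (y - 1).
rewrite addrCA subrr addr0; apply; lra.
Qed.

Lemma logsum_term (a b c : R) : 0 <= a -> 0 < b -> 0 < c ->
  a - b * c <= a * ln (a / b) - a * ln c.
Proof.
move=> a0 b0 c0; have [->|an0] := eqVneq a 0.
  rewrite !mul0r subrr sub0r oppr_le0; exact/ltW/mulr_gt0.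
have ap : 0 < a by rewrite lt_neqAle eq_sym an0.
have y0 : 0 < b * c / a by rewrite divr_gt0 ?mulr_gt0.
have := ln_le_sub1 _ y0.
rewrite ln_div ?posrE ?mulr_gt0 // lnM ?posrE // ln_div ?posrE //.
move=> h.
have : a * (ln b + ln c - ln a) <= a * (b * c / a - 1) by rewrite ler_pM2l.
have -> : a * (b * c / a - 1) = b * c - a by field; rewrite gt_eqF.
lra.
Qed.

Variable n : nat.

Lemma logsum (P : pred 'I_n) (a b : 'I_n -> R) :
  (forall i, 0 <= a i) -> (forall i, 0 < b i) ->
  (\sum_(i | P i) a i) * ln ((\sum_(i | P i) a i) / \sum_(i | P i) b i)
    <= \sum_(i | P i) a i * ln (a i / b i).
Proof.
move=> a0 b0.
set A := \sum_(i | P i) a i; set B := \sum_(i | P i) b i.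
have A0 : 0 <= A by apply: sumr_ge0.
have B0 : 0 <= B by apply: sumr_ge0 => i _; exact: ltW.
have [Ae|An] := eqVneq A 0.
  have h := psumr_eq0P (fun i _ => a0 i) Ae; rewrite Ae mul0r big1 // => i Pi.
  by rewrite h // mul0r.
have Ap : 0 < A by rewrite lt_neqAle eq_sym An.
have Bp : 0 < B.
  rewrite lt_neqAle B0 andbT; apply/negP => /eqP Be.
  have h := psumr_eq0P (fun i _ => ltW (b0 i)) (esym Be).
  move: An; rewrite /A big1 ?eqxx // => i Pi.
  by have := b0 i; rewrite (h i Pi) ltxx.
have cp : 0 < A / B by rewrite divr_gt0.
rewrite -subr_ge0.
have -> : \sum_(i | P i) a i * ln (a i / b i) - A * ln (A / B) =
          \sum_(i | P i) (a i * ln (a i / b i) - a i * ln (A / B)).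
  by rewrite sumrB /A mulr_suml.
apply: le_trans (ler_sum _ (fun i _ => logsum_term _ _ _ (a0 i) (b0 i) cp)).
rewrite sumrB -mulr_suml -/A -/B mulrC divfK ?gt_eqF // subrr //.
Qed.


Lemma pinsker (pi q : 'I_n -> R) : (forall i, 0 < pi i) -> \sum_i pi i = 1 ->
  simplex q -> 2^-1 * norm1 (fun i => q i - pi i) ^+ 2 <= KL q pi.
Proof.
move=> pi0 pi1 [q0 q1].
pose P := fun i : 'I_n => pi i <= q i.
set Q := \sum_(i | P i) q i; set Pp := \sum_(i | P i) pi i.
have eQ : \sum_(i | ~~ P i) q i = 1 - Q.
  by rewrite -q1 [\sum_(i < n) q i](bigID P) /= -/Q addrC addrK.
have ePp : \sum_(i | ~~ P i) pi i = 1 - Pp by rewrite -pi1 [\sum_(i < n) pi i](bigID P) /= -/Pp addrC addrK.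
have eN : norm1 (fun i => q i - pi i) = 2 * (Q - Pp).
  rewrite /norm1 (bigID P) /=.
  rewrite (eq_bigr (fun i => q i - pi i)); last first.
    by move=> i Pi; rewrite ger0_norm // subr_ge0.
  rewrite [X in _ + X](eq_bigr (fun i => pi i - q i)); last first.
    by move=> i Pi; rewrite ltr0_norm ?opprB // subr_lt0 ltNge.
  rewrite !sumrB eQ ePp -/Q -/Pp; ring.
have eK : KL q pi = \sum_(i | P i) q i * ln (q i / pi i) +
                    \sum_(i | ~~ P i) q i * ln (q i / pi i).
  by rewrite /KL (bigID P).
have L1 := logsum P _ _ q0 pi0; have L2 := logsum (fun i => ~~ P i) _ _ q0 pi0.
rewrite -/Q -/Pp in L1; rewrite eQ ePp in L2.
have PpQ : Pp <= Q by apply: ler_sum.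
have Q1 : Q <= 1 by rewrite -subr_ge0 -eQ; apply: sumr_ge0.
have Pp0 : 0 <= Pp by apply: sumr_ge0 => i _; exact: ltW.
rewrite eN eK.
have [Ppe|Ppn] := eqVneq Pp 0.
  have h := psumr_eq0P (fun i _ => ltW (pi0 i)) Ppe.
  have Qe : Q = 0.
    rewrite /Q big1 // => i Pi; by have := pi0 i; rewrite (h i Pi) ltxx.
  move: L1 L2; rewrite Qe Ppe !subr0 divr1 ln1 !mulr0 !mul0r => L1 L2.
  rewrite expr0n /= mulr0; lra.
have Ppp : 0 < Pp by rewrite lt_neqAle eq_sym Ppn.
have := binary_pinsker _ _ Ppp PpQ Q1.
have -> : 2^-1 * (2 * (Q - Pp)) ^+ 2 = 2 * (Q - Pp) ^+ 2 by field.
lra.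
Qed.


Lemma KL_self (pi : 'I_n -> R) : (forall i, 0 < pi i) -> KL pi pi = 0.
Proof.
move=> pi0; rewrite /KL big1 // => i _; by rewrite divff ?gt_eqF // ln1 mulr0.
Qed.

Lemma norm1_eq0 (u v : 'I_n -> R) : norm1 (fun i => u i - v i) = 0 -> forall i, u i = v i.
Proof.
move=> h i; have := psumr_eq0P (fun i _ => normr_ge0 (u i - v i)) h (i := i) isT.
by move/eqP; rewrite normr_eq0 subr_eq0 => /eqP.
Qed.

Lemma min_sc (c : 'I_n -> R) (K : R) (F : ('I_n -> R) -> R) (ps : 'I_n -> R) :
  (0 < n)%N ->
  (forall q, simplex q -> F q = 4^-1 * \sum_i c i * q i + K + KL q (@uniform R n)) ->
  simplex ps -> (forall q, simplex q -> F ps <= F q) ->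
  forall q, simplex q -> 2^-1 * norm1 (fun i => q i - ps i) ^+ 2 <= F q - F ps.
Proof.
move=> n0 FE sps psmin.
pose e := fun i : 'I_n => expR (- (4^-1 * c i)).
pose Z := \sum_i e i.
have Z0 : 0 < Z.
  rewrite /Z (bigD1 (Ordinal n0)) //=; apply: ltr_pwDl; first exact: expR_gt0.
  by apply: sumr_ge0 => i _; exact/ltW/expR_gt0.
pose pi := fun i => e i / Z.
have pi0 : forall i, 0 < pi i by move=> i; rewrite divr_gt0 ?expR_gt0.
have pi1 : \sum_i pi i = 1 by rewrite -mulr_suml divff ?gt_eqF.
have spi : simplex pi by split => // i; exact: ltW.
have nR : 0 < (n%:R : R) by rewrite ltr0n.
pose D := K + ln (n%:R) - ln Z.
have Gibbs : forall q, simplex q -> F q = KL q pi + D.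
  move=> q [q0 q1]; have sq : simplex q by split.
  rewrite FE //.
  rewrite /D /KL /uniform mulr_sumr.
  suff E : \sum_i 4^-1 * (c i * q i) + \sum_i q i * ln (q i / n%:R^-1) =
            \sum_i q i * ln (q i / pi i) + (ln n%:R - ln Z) by lra.
  have -> : ln n%:R - ln Z = \sum_i q i * (ln n%:R - ln Z) by rewrite -mulr_suml q1 mul1r.
  rewrite -!big_split /=.
  apply: eq_bigr => i _.
  have [->|qn] := eqVneq (q i) 0; first by rewrite !(mul0r, mulr0) addr0.
  have qp : 0 < q i by rewrite lt_neqAle eq_sym qn q0.
  rewrite (ln_div (x:=q i)) ?posrE ?invr_gt0 // lnV ?posrE //.
  rewrite ln_div ?posrE // /pi ln_div ?posrE ?expR_gt0 // /e expRK; ring.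
have KLp : KL ps pi <= 0.
  have := psmin _ spi; rewrite !Gibbs // KL_self //; lra.
have psE : forall i, ps i = pi i.
  apply: norm1_eq0; have := pinsker _ _ pi0 pi1 sps.
  set N := norm1 _ => h.
  have N0 : 0 <= N by apply: sumr_ge0 => i _.
  have : N ^+ 2 <= 0 by lra.
  move=> h2; have : N ^+ 2 == 0 by rewrite eq_le h2 sqr_ge0.
  by rewrite expf_eq0 /= => /eqP.
move=> q sq; rewrite !Gibbs //.
have -> : KL ps pi = 0 by rewrite -(KL_self _ pi0); apply: eq_bigr => i _; rewrite psE.
have -> : norm1 (fun i => q i - ps i) = norm1 (fun i => q i - pi i).
  by apply: eq_bigr => i _; rewrite psE.
have := pinsker _ _ pi0 pi1 sq; lra.
Qed.
End S.

Section P1.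
Variable R : realType.

Lemma step_scalar (s' a c' b b' : R) : 0 <= s' -> 0 < a -> (s' = 0 -> c' = 0) ->
  a * (- (b * ((c' + a * b') / (s' + a))) + 2^-1 * ((c' + a * b') / (s' + a)) ^+ 2)
  <= - ((c' + a * b) ^+ 2 / (2 * (s' + a))) + c' ^+ 2 / (2 * s')
     + a ^+ 2 / (2 * (s' + a)) * (b - b') ^+ 2.
Proof.
move=> s0 a0 sc.
have [se|sn] := eqVneq s' 0.
  rewrite (sc se) se !add0r mulr0 invr0 mulr0 addr0.
  have an : a != 0 by rewrite gt_eqF.
  rewrite le_eqVlt; apply/orP; left; apply/eqP; field; exact: an.
have sp : 0 < s' by rewrite lt_neqAle eq_sym sn s0.
rewrite -subr_ge0.
set w := (c' + a * b') / (s' + a).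
have -> : - ((c' + a * b) ^+ 2 / (2 * (s' + a))) + c' ^+ 2 / (2 * s') +
  a ^+ 2 / (2 * (s' + a)) * (b - b') ^+ 2 - a * (- (b * w) + 2^-1 * w ^+ 2)
  = s' / 2 * (w - c' / s') ^+ 2.
  rewrite /w; field; rewrite ?gt_eqF ?addr_gt0 //.
by apply: mulr_ge0; [apply: divr_ge0 => //; exact: ltW | exact: sqr_ge0].
Qed.



Variables (n d : nat).
Implicit Types (A : 'I_n -> 'I_d -> R) (q : 'I_n -> R) (w : 'I_d -> R).

Definition bv A q (k : 'I_d) : R := \sum_i q i * A i k.

Lemma gfunE A w q : gfun A w q = \sum_k (bv A q k * w k - 2^-1 * w k ^+ 2).
Proof.
rewrite /gfun /dotd /sqnorm2 sumrB mulr_sumr; congr (_ - _).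
rewrite (eq_bigr (fun i => \sum_k q i * (A i k * w k))); last by move=> i _; rewrite mulr_sumr.
rewrite exchange_big /=; apply: eq_bigr => k _; rewrite /bv mulr_suml.
by apply: eq_bigr => i _; rewrite mulrA.
Qed.

Lemma gsumE (r : seq nat) (a : nat -> R) A w (p : nat -> 'I_n -> R) :
  \sum_(j <- r) a j * gfun A w (p j) =
  \sum_k ((\sum_(j <- r) a j * bv A (p j) k) * w k - 2^-1 * (\sum_(j <- r) a j) * w k ^+ 2).
Proof.
rewrite (eq_bigr (fun j => \sum_k (a j * bv A (p j) k * w k - 2^-1 * a j * w k ^+ 2))); last first.
  by move=> j _; rewrite gfunE mulr_sumr; apply: eq_bigr => k _; ring.
rewrite exchange_big /=; apply: eq_bigr => k _.
by rewrite sumrB -!mulr_suml -mulr_sumr.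
Qed.

Lemma sq_sum_le (A : 'I_n -> 'I_d -> R) (z : 'I_n -> R) :
  (forall i, sqnorm2 (A i) <= 1) ->
  \sum_k (\sum_i z i * A i k) ^+ 2 <= (\sum_i `|z i|) ^+ 2.
Proof.
move=> hA.
have dot1 : forall i j, `|\sum_k A i k * A j k| <= 1.
  move=> i j; rewrite ler_norml; apply/andP; split.
    have : 0 <= \sum_k (A i k + A j k) ^+ 2 by apply: sumr_ge0 => k _; exact: sqr_ge0.
    rewrite (eq_bigr (fun k => A i k ^+ 2 + A j k ^+ 2 + 2 * (A i k * A j k))); last by move=> k _; ring.
    rewrite !big_split /= -mulr_sumr; have := hA i; have := hA j; rewrite /sqnorm2; lra.
  have : 0 <= \sum_k (A i k - A j k) ^+ 2 by apply: sumr_ge0 => k _; exact: sqr_ge0.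
  rewrite (eq_bigr (fun k => A i k ^+ 2 + A j k ^+ 2 - 2 * (A i k * A j k))); last by move=> k _; ring.
  rewrite sumrB big_split /= -mulr_sumr; have := hA i; have := hA j; rewrite /sqnorm2; lra.
have -> : \sum_k (\sum_i z i * A i k) ^+ 2 =
          \sum_i \sum_j z i * z j * \sum_k A i k * A j k.
  rewrite (eq_bigr (fun k => \sum_i \sum_j z i * A i k * (z j * A j k))); last first.
    by move=> k _; rewrite expr2 mulr_suml; apply: eq_bigr => i _; rewrite mulr_sumr.
  rewrite exchange_big /=; apply: eq_bigr => i _.
  rewrite exchange_big /=; apply: eq_bigr => j _.
  by rewrite mulr_sumr; apply: eq_bigr => k _; ring.
rewrite expr2 mulr_suml; apply: ler_sum => i _; rewrite mulr_sumr; apply: ler_sum => j _.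
apply: le_trans (ler_norm _) _; rewrite normrM normrM.
by apply: ler_piMr => //; apply: mulr_ge0.
Qed.



Definition Sa (t : nat) : R := \sum_(1 <= j < t.+1) alpha R j.
Definition Cc A (p : nat -> 'I_n -> R) (t : nat) (k : 'I_d) : R :=
  \sum_(1 <= j < t.+1) alpha R j * bv A (p j) k.
Definition Phi A p t : R := \sum_k (- (Cc A p t k ^+ 2 / (2 * Sa t))).

Lemma Sa_rec t : Sa t.+1 = Sa t + alpha R t.+1.
Proof. by rewrite /Sa big_nat_recr. Qed.

Lemma Cc_rec A p t k : Cc A p t.+1 k = Cc A p t k + alpha R t.+1 * bv A (p t.+1) k.
Proof. by rewrite /Cc big_nat_recr. Qed.

Lemma Sa0 : Sa 0 = 0. Proof. by rewrite /Sa big_geq. Qed.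
Lemma Cc0 A p k : Cc A p 0 k = 0. Proof. by rewrite /Cc big_geq. Qed.

Lemma SaE t : 2 * Sa t = t%:R * (t%:R + 1).
Proof.
elim: t => [|t IH]; first by rewrite Sa0 mulr0 mul0r.
rewrite Sa_rec mulrDr IH /alpha -addn1 natrD; ring.
Qed.

Lemma Sa_gt0 t : (0 < t)%N -> 0 < Sa t.
Proof.
move=> t0; have := SaE t; have : 0 < (t%:R : R) by rewrite ltr0n.
move=> h1 h2; have : 0 < 2 * Sa t by rewrite h2 mulr_gt0 // addr_gt0.
by rewrite pmulr_rgt0.
Qed.

Lemma hE A w q : - gfun A w q = \sum_k (- (bv A q k * w k) + 2^-1 * w k ^+ 2).
Proof. by rewrite gfunE -sumrN; apply: eq_bigr => k _; rewrite opprB addrC. Qed.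

Lemma obj_wE A p m w : obj_w A p m.+1 w =
  \sum_k (- ((Cc A p m k + alpha R m.+1 * bv A (p m) k) * w k) + 2^-1 * Sa m.+1 * w k ^+ 2).
Proof.
rewrite /obj_w.
rewrite (eq_bigr (fun j => - (alpha R j * gfun A w (p j)))); last by move=> j _; rewrite mulrN.
rewrite sumrN gsumE /= hE [alpha R m.+1 * _]mulr_sumr -sumrN -big_split /=.
apply: eq_bigr => k _; rewrite Sa_rec /Cc /Sa; ring.
Qed.

Lemma quad_argmin (B : 'I_d -> R) (s : R) w : 0 < s ->
  (forall v : 'I_d -> R, \sum_k (- (B k * w k) + 2^-1 * s * w k ^+ 2) <=
                         \sum_k (- (B k * v k) + 2^-1 * s * v k ^+ 2)) ->
  forall k, w k = B k / s.
Proof.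
move=> s0 h.
have := h (fun k => B k / s); rewrite -subr_le0 -sumrB.
rewrite (eq_bigr (fun k => s / 2 * (w k - B k / s) ^+ 2)); last first.
  by move=> k _; field; rewrite gt_eqF.
move=> hle.
have hge : forall k, 0 <= s / 2 * (w k - B k / s) ^+ 2.
  by move=> k; apply: mulr_ge0; [apply: divr_ge0 => //; exact: ltW|exact: sqr_ge0].
have h0 : \sum_k s / 2 * (w k - B k / s) ^+ 2 = 0.
  by apply/eqP; rewrite eq_le hle sumr_ge0.
move=> k; have := psumr_eq0P (fun k _ => hge k) h0 (i := k) isT.
move/eqP; rewrite mulf_eq0 mulf_eq0 gt_eqF //= invr_eq0 pnatr_eq0 /= sqrf_eq0 subr_eq0.
by move/eqP.
Qed.



Lemma bvB A u v k : bv A u k - bv A v k = bv A (fun i => u i - v i) k.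
Proof. by rewrite /bv -sumrB; apply: eq_bigr => i _; rewrite mulrBl. Qed.

Lemma regret_w A T (w : nat -> 'I_d -> R) (p : nat -> 'I_n -> R) :
  (forall i, sqnorm2 (A i) <= 1) ->
  (forall t, (1 <= t <= T)%N -> forall w', obj_w A p t (w t) <= obj_w A p t w') ->
  forall w' : 'I_d -> R,
  \sum_(1 <= t < T.+1) alpha R t * (- gfun A (w t) (p t))
  - \sum_(1 <= t < T.+1) alpha R t * (- gfun A w' (p t))
  <= 2 * \sum_(1 <= t < T.+1) (norm1 (fun i => p t i - p t.-1 i)) ^+ 2.
Proof.
move=> hA hw.
set N := fun t => (norm1 (fun i => p t i - p t.-1 i)) ^+ 2.
have N0 : forall t, 0 <= N t by move=> t; exact: sqr_ge0.
have claim : forall m, (m <= T)%N ->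
  \sum_(1 <= t < m.+1) alpha R t * (- gfun A (w t) (p t)) <=
  Phi A p m + \sum_(1 <= t < m.+1) N t.
  elim=> [|m IH] hm.
    rewrite !big_geq // addr0 /Phi big1 // => k _; rewrite Cc0 expr0n /= mul0r oppr0 //.
  rewrite big_nat_recr //= [\sum_(1 <= t < m.+2) N t]big_nat_recr //=.
  have IH' := IH (ltnW hm).
  suff step : alpha R m.+1 * - gfun A (w m.+1) (p m.+1) <= Phi A p m.+1 - Phi A p m + N m.+1.
    lra.
  have a0 : 0 < alpha R m.+1 by rewrite /alpha ltr0n.
  have S0 : 0 < Sa m.+1 by apply: Sa_gt0.
  have wk : forall k, w m.+1 k = (Cc A p m k + alpha R m.+1 * bv A (p m) k) / Sa m.+1.
    apply: quad_argmin => // v; rewrite -!obj_wE; apply: hw; rewrite hm andbT //.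
  have sc : Sa m = 0 -> forall k, Cc A p m k = 0.
    clear -S0; case: m S0 => [|m] S0; first by move=> _ k; rewrite Cc0.
    by move=> h; have := @Sa_gt0 m.+1 (ltn0Sn m); rewrite h ltxx.
  have Sm0 : 0 <= Sa m.
    by clear; case: m => [|m]; [rewrite Sa0|exact/ltW/Sa_gt0].
  pose c2 := alpha R m.+1 ^+ 2 / (2 * Sa m.+1).
  have key : alpha R m.+1 * - gfun A (w m.+1) (p m.+1) <=
             Phi A p m.+1 - Phi A p m + c2 * \sum_k (bv A (p m.+1) k - bv A (p m) k) ^+ 2.
    rewrite hE mulr_sumr /Phi -sumrB mulr_sumr -big_split /=.
    apply: ler_sum => k _; rewrite wk Cc_rec Sa_rec opprK.
    have := step_scalar (Sa m) (alpha R m.+1) (Cc A p m k) (bv A (p m.+1) k) (bv A (p m) k) Sm0 a0 (fun h => sc h k).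
    by rewrite /c2 Sa_rec.
  apply: le_trans key _; rewrite lerD2l.
  have c20 : 0 <= c2 by rewrite /c2 divr_ge0 ?sqr_ge0 // mulr_ge0 // ltW.
  have c21 : c2 <= 1.
    rewrite /c2 ler_pdivrMr ?mulr_gt0 // mul1r SaE /alpha.
    by rewrite expr2 ler_pM2l ?ltr0n // lerDl.
  have hb : \sum_k (bv A (p m.+1) k - bv A (p m) k) ^+ 2 <= N m.+1.
    under eq_bigr do rewrite bvB.
    by apply: sq_sum_le.
  apply: le_trans (ler_pM c20 (sumr_ge0 _ (fun k _ => sqr_ge0 _)) c21 hb) _.
  by rewrite mul1r.
move=> w'.
case: T hw claim => [|T] hw claim.
  by rewrite !big_geq // subrr mulr0.
have := claim T.+1 (leqnn _).
have S0 : 0 < Sa T.+1 by apply: Sa_gt0.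
have low : Phi A p T.+1 <= \sum_(1 <= t < T.+2) alpha R t * (- gfun A w' (p t)).
  rewrite (eq_bigr (fun j => - (alpha R j * gfun A w' (p j)))); last by move=> j _; rewrite mulrN.
  rewrite sumrN gsumE -sumrN /Phi; apply: ler_sum => k _.
  rewrite -subr_ge0 -/(Sa T.+1) -/(Cc A p T.+1 k).
  have -> : - ((Cc A p T.+1 k) * w' k - 2^-1 * Sa T.+1 * w' k ^+ 2) -
            - (Cc A p T.+1 k ^+ 2 / (2 * Sa T.+1)) =
            Sa T.+1 / 2 * (w' k - Cc A p T.+1 k / Sa T.+1) ^+ 2.
    by field; rewrite gt_eqF.
  by apply: mulr_ge0; [apply: divr_ge0 => //; exact: ltW|exact: sqr_ge0].
have : 0 <= \sum_(1 <= t < T.+2) N t by apply: sumr_ge0 => t _.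
rewrite /N; lra.
Qed.



Definition cp A (w : nat -> 'I_d -> R) t (i : 'I_n) : R :=
  \sum_(1 <= s < t.+1) alpha R s * dotd (A i) (w s).
Definition Kp (w : nat -> 'I_d -> R) t : R :=
  4^-1 * \sum_(1 <= s < t.+1) alpha R s * (- (2^-1 * sqnorm2 (w s))).

Lemma obj_pE A (w : nat -> 'I_d -> R) t q :
  obj_p A w t q = 4^-1 * \sum_i cp A w t i * q i + Kp w t + KL q (@uniform R n).
Proof.
rewrite /obj_p /Kp /gfun; congr (_ + _).
rewrite (eq_bigr (fun s => alpha R s * (\sum_i q i * dotd (A i) (w s)) +
                          alpha R s * (- (2^-1 * sqnorm2 (w s))))); last first.
  by move=> s _; rewrite mulrDr.
rewrite big_split /= mulrDr; congr (_ + _); congr (_ * _).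
rewrite (eq_bigr (fun s => \sum_i alpha R s * dotd (A i) (w s) * q i)); last first.
  by move=> s _; rewrite mulr_sumr; apply: eq_bigr => i _; ring.
rewrite exchange_big /=; apply: eq_bigr => i _; by rewrite /cp mulr_suml.
Qed.

Lemma obj_p_rec A (w : nat -> 'I_d -> R) m q :
  obj_p A w m.+1 q = obj_p A w m q + 4^-1 * (alpha R m.+1 * gfun A (w m.+1) q).
Proof. rewrite /obj_p big_nat_recr //= mulrDr; ring. Qed.

Lemma obj_p0 A (w : nat -> 'I_d -> R) q : obj_p A w 0 q = KL q (@uniform R n).
Proof. by rewrite /obj_p big_geq // mulr0 add0r. Qed.

Lemma uniform_gt0 : (0 < n)%N -> forall i, 0 < @uniform R n i.
Proof. by move=> n0 i; rewrite /uniform invr_gt0 ltr0n. Qed.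

Lemma uniform_sum : (0 < n)%N -> \sum_i @uniform R n i = 1.
Proof.
move=> n0; rewrite /uniform sumr_const card_ord -[_ *+ n]mulr_natr mulVf //.
by rewrite pnatr_eq0 -lt0n.
Qed.

Lemma uniform_simplex : (0 < n)%N -> simplex (@uniform R n).
Proof. move=> n0; split; [move=> i; exact/ltW/uniform_gt0|exact: uniform_sum]. Qed.

Lemma KLu_ge0 q : (0 < n)%N -> simplex q -> 0 <= KL q (@uniform R n).
Proof.
move=> n0 sq; have := @pinsker R n _ _ (uniform_gt0 n0) (uniform_sum n0) sq.
apply: le_trans; apply: mulr_ge0 => //; exact: sqr_ge0.
Qed.

Lemma KLu_le q : (0 < n)%N -> simplex q -> KL q (@uniform R n) <= ln (n%:R).
Proof.
move=> n0 [q0 q1].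
have nR : 0 < (n%:R : R) by rewrite ltr0n.
have -> : ln (n%:R : R) = \sum_i q i * ln n%:R by rewrite -mulr_suml q1 mul1r.
apply: ler_sum => i _.
have [->|qn] := eqVneq (q i) 0; first by rewrite !mul0r.
have qp : 0 < q i by rewrite lt_neqAle eq_sym qn q0.
rewrite ler_pM2l // /uniform invrK lnM ?posrE // gerDr ln_le0 //.
rewrite -q1 (bigD1 i) //= lerDl; exact: sumr_ge0.
Qed.

Lemma regret_p A T (w : nat -> 'I_d -> R) (p : nat -> 'I_n -> R) :
  (0 < n)%N -> p 0%N = @uniform R n ->
  (forall t, (1 <= t <= T)%N ->
     simplex (p t) /\ forall q, simplex q -> obj_p A w t (p t) <= obj_p A w t q) ->
  forall q, simplex q ->
  \sum_(1 <= t < T.+1) alpha R t * gfun A (w t) (p t)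
  - \sum_(1 <= t < T.+1) alpha R t * gfun A (w t) q
  <= 4 * ln (n%:R : R)
     - 2 * \sum_(1 <= t < T.+1) (norm1 (fun i => p t i - p t.-1 i)) ^+ 2.
Proof.
move=> n0 p0 hp.
set N := fun t => (norm1 (fun i => p t i - p t.-1 i)) ^+ 2.
have pmin : forall t, (t <= T)%N ->
    simplex (p t) /\ forall q, simplex q -> obj_p A w t (p t) <= obj_p A w t q.
  case=> [|t] ht; last by apply: hp; rewrite ht.
  rewrite p0; split; first exact: uniform_simplex.
  move=> q sq; rewrite !obj_p0 KL_self; [exact: KLu_ge0|exact: uniform_gt0].
have op00 : obj_p A w 0 (p 0%N) = 0.
  by rewrite obj_p0 p0 KL_self //; exact: uniform_gt0.
have claim : forall m, (m <= T)%N ->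
  \sum_(1 <= t < m.+1) alpha R t * gfun A (w t) (p t) <=
  4 * obj_p A w m (p m) - 4 * obj_p A w 0 (p 0%N) - 2 * \sum_(1 <= t < m.+1) N t.
  elim=> [|m IH] hm.
    by rewrite !big_geq // subrr mulr0 subr0.
  rewrite big_nat_recr //= [\sum_(1 <= t < m.+2) N t]big_nat_recr //=.
  have IH' := IH (ltnW hm).
  have [spm minm] := pmin m (ltnW hm).
  have [spm1 _] := pmin m.+1 hm.
  have sc := @min_sc R n (cp A w m) (Kp w m) _ _ n0 (fun q _ => obj_pE A w m q) spm minm _ spm1.
  have e := obj_p_rec A w m (p m.+1).
  rewrite /N /=; rewrite /N in IH'; lra.
move=> q sq.
have := claim T (leqnn T).
have [_ minT] := pmin T (leqnn T).
have := minT q sq.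
have := KLu_le _ n0 sq.
rewrite op00 /obj_p /N; lra.
Qed.



Lemma sumN_alpha (T : nat) (f : nat -> R) :
  \sum_(1 <= t < T.+1) alpha R t * (- f t) = - \sum_(1 <= t < T.+1) alpha R t * f t.
Proof. by rewrite -sumrN; apply: eq_bigr => t _; rewrite mulrN. Qed.

Lemma margin A T (w : nat -> 'I_d -> R) (p : nat -> 'I_n -> R) (gamma : R) (wstar : 'I_d -> R) :
  (0 < n)%N -> (forall i, sqnorm2 (A i) <= 1) ->
  sqnorm2 wstar = 1 -> (forall i, gamma <= dotd (A i) wstar) -> 0 < gamma ->
  dynamics A T w p ->
  4 * Num.sqrt (ln (n%:R : R)) / gamma <= T%:R ->
  forall i, 0 <= dotd (A i) (wbar w T).
Proof.
move=> n0 hA ws1 hws g0 [p0 [hw hp]] hT i.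
case: T hw hp hT => [|T] hw hp hT.
  rewrite /dotd big1 // => k _; rewrite /wbar !big_geq // mul0r mulr0 //.
set S := Sa T.+1.
have S0 : 0 < S by apply: Sa_gt0.
pose w' := fun k => Cc A p T.+1 k / S.
pose e := fun j : 'I_n => ((j == i)%:R : R).
have se : simplex e.
  split; first by move=> j; rewrite /e ler0n.
  rewrite (bigD1 i) //= /e eqxx big1 ?addr0 // => j /negbTE ->; done.
have H1 := @regret_w A T.+1 w p hA hw w'.
have H2 := @regret_p A T.+1 w p n0 p0 hp _ se.
rewrite !sumN_alpha in H1.
have V1 : \sum_(1 <= t < T.+2) alpha R t * gfun A w' (p t) = S / 2 * sqnorm2 w'.
  rewrite gsumE /sqnorm2 [S / 2 * _]mulr_sumr; apply: eq_bigr => k _.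
  rewrite -[\sum_(1 <= j < T.+2) alpha R j * bv A (p j) k]/(Cc A p T.+1 k).
  rewrite -[\sum_(1 <= j < T.+2) alpha R j]/S /w'; field; exact: lt0r_neq0.
have V2 : \sum_(1 <= t < T.+2) alpha R t * gfun A (w t) e <= S * dotd (A i) (wbar w T.+1).
  have -> : S * dotd (A i) (wbar w T.+1) = \sum_(1 <= t < T.+2) alpha R t * dotd (A i) (w t).
    have E : \sum_(1 <= t < T.+2) alpha R t * dotd (A i) (w t) =
             \sum_k A i k * \sum_(1 <= t < T.+2) alpha R t * w t k.
      transitivity (\sum_(1 <= t < T.+2) \sum_k alpha R t * (A i k * w t k)).
        by apply: eq_bigr => t _; rewrite /dotd mulr_sumr.
      rewrite exchange_big /=; apply: eq_bigr => k _; rewrite mulr_sumr.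
      by apply: eq_bigr => t _; ring.
    rewrite E /dotd /wbar -/S mulr_sumr; apply: eq_bigr => k _.
    rewrite -[\sum_(1 <= t < T.+2) alpha R t]/S; field; exact: lt0r_neq0.
  apply: ler_sum => t _; apply: ler_wpM2l; first by rewrite /alpha ler0n.
  rewrite /gfun (bigD1 i) //= /e eqxx mul1r big1 ?addr0; last first.
    by move=> j /negbTE ->; rewrite mul0r.
  rewrite gerBl; apply: mulr_ge0 => //; apply: sumr_ge0 => k _; exact: sqr_ge0.
pose lam := \sum_k w' k * wstar k.
have E2 : S * lam = \sum_(1 <= t < T.+2) alpha R t * \sum_i p t i * dotd (A i) wstar.
  transitivity (\sum_k \sum_(1 <= t < T.+2) \sum_i alpha R t * p t i * (A i k * wstar k)).
    rewrite /lam mulr_sumr; apply: eq_bigr => k _.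
    have -> : S * (w' k * wstar k) = Cc A p T.+1 k * wstar k by rewrite /w'; field; exact: lt0r_neq0.
    rewrite /Cc mulr_suml.
    apply: eq_bigr => t _; rewrite /bv -mulrA mulr_suml mulr_sumr; apply: eq_bigr => j _; ring.
  rewrite exchange_big /=; apply: eq_bigr => t _.
  rewrite exchange_big /= mulr_sumr; apply: eq_bigr => j _.
  rewrite /dotd !mulr_sumr; apply: eq_bigr => k _; ring.
have lamg : gamma <= lam.
  rewrite -(ler_pM2l S0) E2 /S /Sa mulr_suml.
  apply: ler_sum_nat => t /andP[t1 t2]; apply: ler_wpM2l; first by rewrite /alpha ler0n.
  have [[pt0 pt1] _] := hp t ltac:(by rewrite t1 -ltnS t2).
  rewrite -[gamma]mul1r -pt1 mulr_suml; apply: ler_sum => j _.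
  by apply: ler_wpM2l; [exact: pt0|exact: hws].
have sqn : lam ^+ 2 <= sqnorm2 w'.
  have : 0 <= \sum_k (w' k - lam * wstar k) ^+ 2 by apply: sumr_ge0 => k _; exact: sqr_ge0.
  rewrite (eq_bigr (fun k => w' k ^+ 2 - 2 * lam * (w' k * wstar k) + lam ^+ 2 * wstar k ^+ 2)); last first.
    by move=> k _; ring.
  rewrite big_split sumrB /= -!mulr_sumr -/lam.
  have -> : \sum_k wstar k ^+ 2 = 1 by exact: ws1.
  rewrite /sqnorm2; lra.
have lng : 0 <= ln (n%:R : R) by apply: ln_ge0; rewrite ler1n.
have hT' : 4 * Num.sqrt (ln (n%:R : R)) <= T.+1%:R * gamma by rewrite -ler_pdivrMr.
have sq0 : 0 <= Num.sqrt (ln (n%:R : R)) by apply: sqrtr_ge0.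
have hT2 : (4 * Num.sqrt (ln (n%:R : R))) * (4 * Num.sqrt (ln (n%:R : R))) <=
           (T.+1%:R * gamma) * (T.+1%:R * gamma).
  by apply: ler_pM => //; apply: mulr_ge0.
have sqE : Num.sqrt (ln (n%:R : R)) * Num.sqrt (ln (n%:R : R)) = ln (n%:R : R).
  by rewrite -expr2 sqr_sqrtr.
have SE := SaE T.+1; rewrite -/S in SE.
have Tg : T.+1%:R * T.+1%:R * gamma ^+ 2 <= T.+1%:R * (T.+1%:R + 1) * gamma ^+ 2.
  apply: ler_wpM2r; first exact: sqr_ge0.
  by apply: ler_wpM2l; [exact: ler0n|rewrite lerDl].
have g2 : gamma ^+ 2 <= lam ^+ 2.
  by apply: ler_pM => //; exact: ltW.
have Sw : S / 2 * gamma ^+ 2 <= S / 2 * sqnorm2 w'.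
  by apply: ler_wpM2l; [apply: divr_ge0; [exact: ltW|]|exact: le_trans g2 sqn].
have key : 0 <= S * dotd (A i) (wbar w T.+1).
  have : 16 * ln (n%:R : R) <= 2 * S * gamma ^+ 2.
    rewrite SE; move: hT2 Tg; rewrite -sqE; nra.
  lra.
by rewrite pmulr_rge0 in key.
Qed.

End P1.


Local Close Scope classical_set_scope.

Lemma rowA (R : realType) (n d : nat) (x : 'I_n -> 'I_d -> R) (y : 'I_n -> R) :
  (forall i, y i = 1 \/ y i = -1) -> (forall i, sqnorm2 (x i) <= 1) ->
  forall i, sqnorm2 (Amat x y i) <= 1.
Proof.
move=> hy hx i.
have y2 : y i ^+ 2 = 1 by case: (hy i) => ->; rewrite ?expr1n ?sqrrN ?expr1n.
rewrite /sqnorm2 /Amat (eq_bigr (fun k => y i ^+ 2 * x i k ^+ 2)); last by move=> k _; rewrite exprMn.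
by rewrite -mulr_sumr y2 mul1r; exact: hx.
Qed.

Theorem theorem3 (R : realType) :
  (forall (n d : nat) (x : 'I_n -> 'I_d -> R) (y : 'I_n -> R)
     (gamma : R) (T : nat) (w : nat -> 'I_d -> R) (p : nat -> 'I_n -> R),
     data_ok x y gamma -> dynamics (Amat x y) T w p ->
     (* R^w <= 2 sum ||p_t - p_{t-1}||_1^2 *)
     (forall w' : 'I_d -> R,
        \sum_(1 <= t < T.+1) alpha R t * (- gfun (Amat x y) (w t) (p t))
        - \sum_(1 <= t < T.+1) alpha R t * (- gfun (Amat x y) w' (p t))
        <= 2 * \sum_(1 <= t < T.+1) (norm1 (fun i => p t i - p t.-1 i)) ^+ 2) /\
     (* R^p <= 4 log n - 2 sum ||p_t - p_{t-1}||_1^2 *)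
     (forall q : 'I_n -> R, simplex q ->
        \sum_(1 <= t < T.+1) alpha R t * gfun (Amat x y) (w t) (p t)
        - \sum_(1 <= t < T.+1) alpha R t * gfun (Amat x y) (w t) q
        <= 4 * ln (n%:R : R)
           - 2 * \sum_(1 <= t < T.+1) (norm1 (fun i => p t i - p t.-1 i)) ^+ 2)) /\
  (exists C : R, 0 < C /\
     forall (n d : nat) (x : 'I_n -> 'I_d -> R) (y : 'I_n -> R)
       (gamma : R) (T : nat) (w : nat -> 'I_d -> R) (p : nat -> 'I_n -> R),
       data_ok x y gamma -> dynamics (Amat x y) T w p ->
       C * Num.sqrt (ln (n%:R : R)) / gamma <= T%:R ->
       forall i : 'I_n, 0 <= dotd (Amat x y i) (wbar w T)).
Proof.
split.
  move=> n d x y gamma T w p [n0 [hy [hx _]]] [p0 [hw hp]].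
  have hA := rowA _ _ _ _ _ hy hx.
  split.
    exact: (@regret_w R n d (Amat x y) T w p hA hw).
  exact: (@regret_p R n d (Amat x y) T w p n0 p0 hp).
exists 4; split => //.
move=> n d x y gamma T w p [n0 [hy [hx [[ws [ws1 [hws _]]] g0]]]] dyn hT i.
exact: (@margin R n d (Amat x y) T w p gamma ws n0 (rowA _ _ _ _ _ hy hx) ws1 hws g0 dyn hT i).
Qed.
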